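(* There is an absolute constant $c>0$ such that for all integers $n\ge2$, every prime power $q$, every real $\sigma\ge1$, and every $\sigma$-secure $n$-party one-round aggregation protocol over $\mathbb{F}_q$ in the anonymized model in which each party sends $m$ messages, we have $m\ge c\,\frac{\log q}{\log n}$.
   Context: An $n$-party one-round aggregation protocol over $\mathbb{F}_q$ with $m$ messages per party consists of a randomized encoder $\mathsf{Enc}:\mathbb{F}_q\to[\ell]^m$ (for some positive integer $\ell$; each party applies it to its input with independent randomness) and an analyzer $\mathcal{A}:[\ell]^{nm}\to\mathbb{F}_q$ such that for every $\mathbf{x}\in\mathbb{F}_q^n$, every possible realization of the encodings $\mathsf{Enc}(x_1),\dots,\mathsf{Enc}(x_n)$, and every permutation $\pi$ of $[nm]$, the analyzer applied to the concatenation $(\mathsf{Enc}(x_1),\dots,\mathsf{Enc}(x_n))$ with coordinates permuted by $\pi$ outputs $\sum_i x_i$. For $\mathbf{x}\in\mathbb{F}_q^n$, $\mathcal{S}^{\mathsf{Enc}}_{\mathbf{x}}$ is the distribution on $[\ell]^{nm}$ of this concatenation after applying an independent uniformly random permutation of the $nm$ coordinates. The protocol is $\sigma$-secure if $\mathrm{SD}(\mathcal{S}^{\mathsf{Enc}}_{\mathbf{x}},\mathcal{S}^{\mathsf{Enc}}_{\mathbf{x}'})\le2^{-\sigma}$ for all $\mathbf{x},\mathbf{x}'\in\mathbb{F}_q^n$ with $\sum_ix_i=\sum_ix'_i$, where $\mathrm{SD}$ is statistical distance. *)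

(* Defs.v *)
From mathcomp Require Import all_boot all_order all_algebra all_fingroup all_field.
From Stdlib Require Import Reals.

Set Implicit Arguments.
Unset Strict Implicit.
Unset Printing Implicit Defensive.

Section Protocol.

Variables (F : finFieldType) (n m l : nat).

Definition msgs := {ffun 'I_m -> 'I_l}.
Definition transcript := {ffun 'I_(n * m) -> 'I_l}.

(* A randomized encoder is given by its output distribution:
   Enc x e = Pr[Enc(x) = e]. *)
Definition is_encoder (Enc : F -> msgs -> R) : Prop :=
  (forall x e, 0 <= Enc x e)%R /\
  (forall x, \big[Rplus/0%R]_(e : msgs) Enc x e = 1%R).

(* concatenation (Enc(x_1), ..., Enc(x_n)), party i's block first i-th *)
Definition concat (e : {ffun 'I_n -> msgs}) : transcript :=
  [ffun k => mxvec (\matrix_(i < n, j < m) e i j) ord0 k].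

Definition permute (pi : {perm 'I_(n * m)}) (t : transcript) : transcript :=
  [ffun k => t (pi k)].

Definition fsum (x : {ffun 'I_n -> F}) : F := \big[GRing.add/GRing.zero]_(i < n) x i.

Definition aggregation_correct (Enc : F -> msgs -> R) (A : transcript -> F) : Prop :=
  forall (x : {ffun 'I_n -> F}) (e : {ffun 'I_n -> msgs}),
    (forall i, 0 < Enc (x i) (e i))%R ->
    forall pi : {perm 'I_(n * m)}, A (permute pi (concat e)) = fsum x.

Definition shuffled (Enc : F -> msgs -> R) (x : {ffun 'I_n -> F}) (y : transcript) : R :=
  (/ INR #|{perm 'I_(n * m)}| *
   \big[Rplus/0%R]_(pi : {perm 'I_(n * m)})
     \big[Rplus/0%R]_(e : {ffun 'I_n -> msgs})
       (\big[Rmult/1%R]_(i < n) Enc (x i) (e i) *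
        (if permute pi (concat e) == y then 1 else 0)))%R.

Definition SD (T : finType) (P Q : T -> R) : R :=
  (/ 2 * \big[Rplus/0%R]_(t : T) Rabs (P t - Q t))%R.

Definition secure (Enc : F -> msgs -> R) (sigma : R) : Prop :=
  forall x x' : {ffun 'I_n -> F}, fsum x = fsum x' ->
    (SD (shuffled Enc x) (shuffled Enc x') <= Rpower 2 (- sigma))%R.

End Protocol.

(* Main.v *)
Require Import Defs.
From HB Require Import structures.
From mathcomp Require Import all_boot all_order all_algebra all_fingroup all_field.
From Stdlib Require Import Reals Lra Classical.
Set Implicit Arguments.
Unset Strict Implicit.
Unset Printing Implicit Defensive.
Notation "m ^ n" := (expn m n) : nat_scope.

Lemma Rplus_assoc' : associative Rplus. Proof. move=> *; ring. Qed.
Lemma Rmult_assoc' : associative Rmult. Proof. move=> *; ring. Qed.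
HB.instance Definition _ := Monoid.isComLaw.Build R 0%R Rplus Rplus_assoc' Rplus_comm Rplus_0_l.
HB.instance Definition _ := Monoid.isComLaw.Build R 1%R Rmult Rmult_assoc' Rmult_comm Rmult_1_l.
HB.instance Definition _ := Monoid.isMulLaw.Build R 0%R Rmult Rmult_0_l Rmult_0_r.
HB.instance Definition _ := Monoid.isAddLaw.Build R Rmult Rplus Rmult_plus_distr_r Rmult_plus_distr_l.
Lemma iter_Rplus k c : iter k (Rplus c) 0%R = (INR k * c)%R.
Proof. elim: k => [|k IH]; first by rewrite /= Rmult_0_l. rewrite iterS IH S_INR; ring. Qed.

Lemma sum_const_R (T : finType) (c : R) :
  \big[Rplus/0%R]_(i : T) c = (INR #|T| * c)%R.
Proof. by rewrite big_const iter_Rplus. Qed.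

Lemma sum_ind_R (T : finType) (t : T) (c : R) :
  \big[Rplus/0%R]_(y : T) (c * (if t == y then 1 else 0))%R = c.
Proof.
rewrite (bigD1 t) //= eqxx big1 ?Rmult_1_r ?Rplus_0_r // => y /negbTE.
by rewrite eq_sym => ->; rewrite Rmult_0_r.
Qed.

Lemma sum_ge0_R (T : finType) (P : pred T) (f : T -> R) :
  (forall i, P i -> 0 <= f i)%R -> (0 <= \big[Rplus/0%R]_(i | P i) f i)%R.
Proof. move=> H; apply: big_ind => //; [lra| move=> *; lra]. Qed.

Lemma prod_ge0_R (T : finType) (f : T -> R) :
  (forall i, 0 <= f i)%R -> (0 <= \big[Rmult/1%R]_i f i)%R.
Proof. move=> H; apply: big_ind => //; [lra| move=> *; exact: Rmult_le_pos]. Qed.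

Lemma sum_le_R (T : finType) (P : pred T) (f g : T -> R) :
  (forall i, P i -> f i <= g i)%R ->
  (\big[Rplus/0%R]_(i | P i) f i <= \big[Rplus/0%R]_(i | P i) g i)%R.
Proof. move=> H; apply: big_ind2 => //; [lra| move=> *; lra]. Qed.

Lemma sum_pos_ex (T : finType) (f : T -> R) :
  (0 < \big[Rplus/0%R]_i f i)%R -> exists i, (0 < f i)%R.
Proof.
move=> H; apply: NNPP => Hn.
have : (\big[Rplus/0%R]_i f i <= 0)%R.
  apply: (big_ind (fun x => x <= 0)%R) => //; [lra| move=> *; lra| move=> i _].
  by apply: Rnot_lt_le => Hi; apply: Hn; exists i.
lra.
Qed.

Lemma prod_pos_ne0 (T : finType) (f : T -> R) i :
  (0 < \big[Rmult/1%R]_j f j)%R -> f i <> 0%R.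
Proof. by move=> H Hi; move: H; rewrite (bigD1 i) //= Hi Rmult_0_l; lra. Qed.

Definition posb (r : R) : bool := if Rlt_dec 0 r then true else false.
Lemma posbP r : reflect (0 < r)%R (posb r).
Proof. by rewrite /posb; case: Rlt_dec => h; constructor. Qed.

Lemma sum_indic_R (T : finType) (p : pred T) :
  \big[Rplus/0%R]_(a : T) (if p a then 1 else 0)%R = INR #|[set a | p a]|.
Proof.
rewrite -big_mkcond (eq_bigl (fun a => a \in [set a | p a])); last by move=> a; rewrite inE.
by rewrite big_const iter_Rplus Rmult_1_r.
Qed.

Lemma SD_lb (T : finType) (P Q : T -> R) :
  (forall y, 0 <= P y)%R -> (forall y, 0 <= Q y)%R ->
  \big[Rplus/0%R]_y P y = 1%R -> \big[Rplus/0%R]_y Q y = 1%R ->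
  (1 - \big[Rplus/0%R]_y (P y * (if posb (Q y) then 1 else 0)) <= SD P Q)%R.
Proof.
move=> P0 Q0 P1 Q1; rewrite /SD.
have H : (\big[Rplus/0%R]_y (Q y + P y + (-2) * (P y * (if posb (Q y) then 1 else 0)))
     <= \big[Rplus/0%R]_y Rabs (P y - Q y))%R.
  apply: sum_le_R => y _; case: posbP => h.
    rewrite Rmult_1_r; have := Rabs_Rabsolu (P y - Q y); split_Rabs; lra.
  rewrite Rmult_0_r; have : Q y = 0%R by have := Q0 y; lra.
  move=> ->; split_Rabs; have := P0 y; lra.
move: H; rewrite big_split big_split /= -big_distrr /= P1 Q1; lra.
Qed.

Section Shuf.
Variables (F : finFieldType) (n m l : nat) (Enc : F -> msgs m l -> R).
Hypothesis encE : is_encoder Enc.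

Lemma shuffled_ge0 (x : {ffun 'I_n -> F}) y : (0 <= shuffled Enc x y)%R.
Proof.
rewrite /shuffled; apply: Rmult_le_pos.
  apply: Rlt_le; apply: Rinv_0_lt_compat; apply: lt_0_INR; apply/ltP.
  by apply/card_gt0P; exists 1%g.
apply: sum_ge0_R => pi _; apply: sum_ge0_R => e _; apply: Rmult_le_pos.
  by apply: prod_ge0_R => i; case: encE.
by case: (_ == _); lra.
Qed.

Lemma shuffled_sum1 (x : {ffun 'I_n -> F}) : \big[Rplus/0%R]_y shuffled Enc x y = 1%R.
Proof.
rewrite /shuffled -big_distrr /= exchange_big /=.
rewrite (eq_bigr (fun pi : {perm 'I_(n * m)} =>
   \big[Rplus/0%R]_(e : {ffun 'I_n -> msgs m l}) \big[Rmult/1%R]_(i < n) Enc (x i) (e i))); last first.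
  move=> pi _; rewrite exchange_big; apply: eq_bigr => e _; exact: sum_ind_R.
rewrite sum_const_R.
have -> : \big[Rplus/0%R]_(e : {ffun 'I_n -> msgs m l}) \big[Rmult/1%R]_(i < n) Enc (x i) (e i) = 1%R.
  rewrite -(bigA_distr_bigA (fun i t => Enc (x i) t)) /=.
  by rewrite big1 // => i _; case: encE.
rewrite Rmult_1_r Rinv_l //; apply: not_0_INR; apply/eqP; rewrite -lt0n.
by apply/card_gt0P; exists 1%g.
Qed.

Lemma shuffled_pos (x : {ffun 'I_n -> F}) y : (0 < shuffled Enc x y)%R ->
  exists (pi : {perm 'I_(n * m)}) (e : {ffun 'I_n -> msgs m l}), (forall i, 0 < Enc (x i) (e i))%R /\ permute pi (concat e) = y.
Proof.
rewrite /shuffled => H.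
have H2 : (0 < \big[Rplus/0%R]_(pi : {perm 'I_(n * m)})
     \big[Rplus/0%R]_(e : {ffun 'I_n -> msgs m l})
       (\big[Rmult/1%R]_(i < n) Enc (x i) (e i) *
        (if permute pi (concat e) == y then 1 else 0)))%R.
  apply: Rnot_le_lt => Hle; move: H; apply: Rle_not_lt.
  have Hp : (0 <= / INR #|{perm 'I_(n * m)}|)%R.
    apply: Rlt_le; apply: Rinv_0_lt_compat; apply: lt_0_INR; apply/ltP.
    by apply/card_gt0P; exists 1%g.
  by have := Rmult_le_compat_l _ _ _ Hp Hle; rewrite Rmult_0_r.
have [pi Hpi] := sum_pos_ex H2; have [e He] := sum_pos_ex Hpi.
exists pi, e; move: He; case: eqP => Hy; last by rewrite Rmult_0_r; lra.
rewrite Rmult_1_r => He; split => // i.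
have Hne := prod_pos_ne0 (i:=i) He; case: encE => h _.
case: (Rle_lt_or_eq_dec _ _ (h (x i) (e i))) => // Heq; by exfalso; apply: Hne.
Qed.
End Shuf.
Section Comb.
Variables (F : finFieldType) (n m l : nat) (Enc : F -> msgs m l -> R)
  (A : transcript n m l -> F).
Hypothesis encE : is_encoder Enc.
Hypothesis corr : aggregation_correct Enc A.
Hypothesis Hn : (1 < n)%N.

Definition i0 : 'I_n := Ordinal (ltnW Hn).
Definition i1 : 'I_n := Ordinal Hn.
Local Open Scope ring_scope.
Import GRing.Theory.
Definition xx (u v : F) : {ffun 'I_n -> F} :=
  [ffun i => if i == i0 then u else if i == i1 then - v else 0].

Lemma fsum_xx u v : fsum (xx u v) = u - v.
Proof.
rewrite /fsum (bigD1 i0) //= (bigD1 i1) //= big1.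
  by rewrite !ffunE eqxx /= addr0.
move=> i /andP [] h1 h0; rewrite ffunE (negbTE h0) (negbTE h1) //.
Qed.

Lemma permuteE (pi : {perm 'I_(n * m)}) (t : transcript n m l) k :
  permute pi t k = t (pi k).
Proof. by rewrite /permute ffunE. Qed.

Lemma concat_idx (e : {ffun 'I_n -> msgs m l}) i j :
  concat e (mxvec_index i j) = e i j.
Proof. by rewrite /concat ffunE mxvecE mxE. Qed.

Lemma mxvec_index_inj i j i' j' :
  mxvec_index (m:=n) (n:=m) i j = mxvec_index i' j' -> i = i' /\ j = j'.
Proof. by move/cast_ord_inj/enum_rank_inj => [] -> ->. Qed.

Definition B : {set 'I_(n * m)} := [set mxvec_index i0 j | j : 'I_m].

Lemma inB i j : (mxvec_index i j \in B) = (i == i0).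
Proof.
apply/imsetP/eqP => [[j' _ /mxvec_index_inj []] //| ->]; by exists j.
Qed.

Lemma card_B : #|B| = m.
Proof.
rewrite card_imset ?card_ord // => j j' /mxvec_index_inj [] //.
Qed.

Lemma concat_mix (e e' : {ffun 'I_n -> msgs m l}) p :
  concat [ffun i => if i == i0 then e i else e' i] p =
  if p \in B then concat e p else concat e' p.
Proof.
by case/mxvec_indexP: p => i j; rewrite !concat_idx inB ffunE; case: eqP => [->|].
Qed.

Lemma key_inj y a a' (pi pi' : {perm 'I_(n * m)}) (e e' : {ffun 'I_n -> msgs m l}) :
  (forall i, 0 < Enc (xx a a i) (e i))%R -> permute pi (concat e) = y ->
  (forall i, 0 < Enc (xx a' a' i) (e' i))%R -> permute pi' (concat e') = y ->
  pi @^-1: B = pi' @^-1: B -> a = a'.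
Proof.
move=> He Hpi He' Hpi' Hs.
have hP k : (pi k \in B) = (pi' k \in B).
  by move: (congr1 (fun S : {set 'I_(n * m)} => k \in S) Hs); rewrite !inE.
pose sigma k := if pi k \in B then pi k else pi' k.
have sinj : injective sigma.
  move=> k1 k2; rewrite /sigma.
  case h1: (pi k1 \in B); case h2: (pi k2 \in B).
  - exact: perm_inj.
  - by move=> E; move: h2; rewrite hP -E h1.
  - by move=> E; move: h1; rewrite hP E h2.
  - rewrite hP in h1; rewrite hP in h2; exact: perm_inj.
pose s := perm sinj.
pose e'' := [ffun i => if i == i0 then e i else e' i].
have Hy : permute s (concat e'') = y.
  apply/ffunP => k; rewrite ffunE permE /sigma concat_mix.
  case h: (pi k \in B); first by rewrite h -Hpi permuteE.
  by rewrite hP in h; rewrite h -Hpi' permuteE.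
have Hpos : forall i, (0 < Enc (xx a a' i) (e'' i))%R.
  move=> i; rewrite ffunE; case: eqP => [->|ne].
    by have := He i0; rewrite !ffunE eqxx.
  by have := He' i; rewrite !ffunE; move/eqP/negbTE: ne => ->.
have h1 := corr Hpos s; rewrite Hy fsum_xx in h1.
have h2 := corr He' pi'; rewrite Hpi' fsum_xx subrr in h2.
by apply: subr0_eq; rewrite -h1 h2.
Qed.

Local Close Scope ring_scope.
Lemma count_bound (y : transcript n m l) :
  (#|[set a | posb (shuffled Enc (xx a a) y)]| <= 'C(n * m, m))%N.
Proof.
set G := [set a | _].
pose wit a (pe : {perm 'I_(n * m)} * {ffun 'I_n -> msgs m l}) :=
  [forall i, posb (Enc (xx a a i) (pe.2 i))] && (permute pe.1 (concat pe.2) == y).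
pose f a := if [pick pe | wit a pe] is Some pe then pe.1 @^-1: B else set0.
have Hwit a : a \in G -> exists pe, wit a pe.
  rewrite inE => /posbP /(shuffled_pos encE) [pi [e [Hp Hy]]].
  exists (pi, e); apply/andP; split; last by apply/eqP.
  by apply/forallP => i; apply/posbP.
have Hf a : a \in G -> exists pe, wit a pe /\ f a = pe.1 @^-1: B.
  move=> Ha; rewrite /f; case: pickP => [pe Hpe | H0]; first by exists pe.
  by have [pe] := Hwit a Ha; rewrite H0.
rewrite -(card_in_imset (f:=f)); last first.
  move=> a a' Ha Ha'; have [[pi e] [w ->]] := Hf a Ha.
  have [[pi' e'] [w' ->]] := Hf a' Ha'.
  move/andP: w => [/forallP Hp /eqP Hy]; move/andP: w' => [/forallP Hp' /eqP Hy'].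
  apply: (key_inj (y:=y) _ Hy _ Hy') => // i; apply/posbP; [exact: Hp | exact: Hp'].
rewrite -[in X in (_ <= X)%N](card_ord (n * m)) -card_draws.
apply: subset_leq_card; apply/subsetP => S /imsetP [a Ha ->]; rewrite inE.
have [pe [_ ->]] := Hf a Ha; rewrite card_preimset ?card_B //; exact: perm_inj.
Qed.
End Comb.

Lemma exp_pow_R x k : (exp x ^ k = exp (INR k * x))%R.
Proof.
elim: k => [|k IH]; first by rewrite /= Rmult_0_l exp_0.
by rewrite S_INR /= IH -exp_plus; congr exp; ring.
Qed.

Lemma INR_muln a b : INR (a * b)%N = (INR a * INR b)%R.
Proof. by rewrite -mult_INR. Qed.

Lemma INR_expn a b : INR (a ^ b)%N = (INR a ^ b)%R.
Proof. elim: b => [|b IH]; first by []. by rewrite expnS INR_muln IH. Qed.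

Lemma succ_pow_le k : (k.+1 ^ k <= 3 * k ^ k)%N.
Proof.
case: k => [|k] //; apply/leP; apply: INR_le.
rewrite INR_muln !INR_expn.
set r := INR k.+1.
have r0 : (0 < r)%R by apply: lt_0_INR; apply/ltP.
have -> : INR k.+2 = (r * (1 + / r))%R.
  rewrite (S_INR k.+1) -/r; field; lra.
rewrite Rpow_mult_distr Rmult_comm; apply: Rmult_le_compat_r.
  by apply: pow_le; lra.
apply: (Rle_trans _ (exp (/ r) ^ k.+1)).
  apply: pow_incr; split.
    by have := Rinv_0_lt_compat _ r0; lra.
  apply: Rlt_le; apply: exp_ineq1; apply: Rgt_not_eq; exact: Rinv_0_lt_compat.
rewrite exp_pow_R -/r Rinv_r; last lra.
have h3 : INR 3 = 3%R by simpl; ring.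
by rewrite h3; exact: exp_le_3.
Qed.

Lemma pow_fact k : (k ^ k <= 3 ^ k * k`!)%N.
Proof.
elim: k => [|k IH] //.
rewrite expnS factS.
apply: leq_trans (_ : k.+1 * (3 * k ^ k) <= _)%N.
  by rewrite leq_mul2l succ_pow_le orbT.
have H3 : (3 * k ^ k <= 3 * (3 ^ k * k`!))%N by rewrite leq_mul2l IH orbT.
apply: leq_trans (leq_mul (leqnn k.+1) H3) _.
by rewrite expnS mulnCA (mulnCA k.+1) mulnA.
Qed.

Lemma ffact_le a b : (a ^_ b <= a ^ b)%N.
Proof.
elim: b => [|b IH] //; rewrite ffactnSr expnSr; apply: leq_mul => //; exact: leq_subr.
Qed.

Lemma bin_bound n m : ('C(n * m, m) <= 3 ^ m * n ^ m)%N.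
Proof.
have := ffact_le (n * m) m; rewrite -bin_ffact expnMn => H.
rewrite -(@leq_pmul2r (m`!)) ?fact_gt0 //.
apply: leq_trans H _; rewrite (mulnC (3 ^ m)) -mulnA leq_mul2l.
by rewrite pow_fact orbT.
Qed.

Lemma final_nat n m : (1 < n)%N -> (0 < m)%N -> (2 * 'C(n * m, m) <= n ^ (4 * m))%N.
Proof.
move=> Hn Hm.
apply: leq_trans (_ : 2 * (3 ^ m * n ^ m) <= _)%N; first by rewrite leq_mul2l bin_bound orbT.
have h2 : (2 <= 2 ^ m)%N by rewrite -{1}(expn1 2) leq_pexp2l.
have h3 : (3 ^ m <= 4 ^ m)%N by rewrite leq_exp2r.
have h8 : (2 * 3 ^ m <= (n ^ 3) ^ m)%N.
  apply: leq_trans (_ : 2 ^ m * 4 ^ m <= _)%N; first exact: leq_mul.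
  rewrite -expnMn leq_exp2r //; apply: leq_trans (_ : 2 ^ 3 <= _)%N => //.
  by rewrite leq_exp2r.
rewrite mulnA (_ : 4 * m = 3 * m + m)%N; last by rewrite mulSn addnC.
by rewrite expnD expnM leq_mul2r h8 orbT.
Qed.

Lemma ln_le' x y : (0 < x)%R -> (x <= y)%R -> (ln x <= ln y)%R.
Proof.
move=> x0 /Rle_lt_or_eq_dec [h|->]; last lra.
by apply: Rlt_le; apply: ln_increasing.
Qed.

Theorem mainTheorem9 :
  exists c : R, (0 < c)%R /\
  forall (n : nat) (F : finFieldType) (sigma : R) (m l : nat)
         (Enc : F -> msgs m l -> R) (A : transcript n m l -> F),
    (2 <= n)%N -> (0 < l)%N -> (1 <= sigma)%R ->
    is_encoder Enc -> aggregation_correct Enc A -> secure n Enc sigma ->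
    (INR m >= c * (ln (INR #|F|) / ln (INR n)))%R.
Proof.
exists (/ 4)%R; split; first lra.
move=> n F sigma m l Enc A Hn Hl Hs encE corr sec.
have encP v : exists e, (0 < Enc v e)%R.
  by apply: sum_pos_ex; case: encE => _ ->; lra.
case: (posnP m) => [m0 | mpos].
  exfalso; subst m.
  have [w Hw] := encP (GRing.zero : F).
  have allw : forall e : msgs 0 l, e = w.
    by move=> e; apply/ffunP => -[k hk]; exfalso; move: hk; rewrite ltn0.
  have Hp (x : {ffun 'I_n -> F}) i : (0 < Enc (x i) ([ffun _ => w] i))%R.
    by have [ev] := encP (x i); rewrite ffunE (allw ev).
  have h1 := corr _ _ (Hp (xx Hn (GRing.one F) (GRing.zero : F))) 1%g.
  have h0 := corr _ _ (Hp (xx Hn (GRing.zero : F) (GRing.zero : F))) 1%g.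
  rewrite fsum_xx in h1; rewrite fsum_xx h1 in h0; move/eqP: h0.
  by rewrite !GRing.subr0 GRing.oner_eq0.
pose S0 := shuffled Enc (xx Hn (GRing.zero : F) (GRing.zero : F)).
pose cnt y := #|[set a | posb (shuffled Enc (xx Hn a a) y)]|.
have Hhalf a : (/ 2 <= \big[Rplus/0%R]_y (S0 y *
      (if posb (shuffled Enc (xx Hn a a) y) then 1 else 0)))%R.
  have h := SD_lb (shuffled_ge0 encE (xx Hn (GRing.zero : F) (GRing.zero : F)))
     (shuffled_ge0 encE (xx Hn a a)) (shuffled_sum1 encE _) (shuffled_sum1 encE _).
  have hs := sec (xx Hn (GRing.zero : F) (GRing.zero : F)) (xx Hn a a).
  rewrite !fsum_xx !GRing.subrr in hs; have {}hs := hs erefl.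
  have hp : (Rpower 2 (- sigma) <= / 2)%R.
    apply: Rle_trans (Rle_Rpower 2 (- sigma) (-1) _ _) _; try lra.
    rewrite Rpower_Ropp Rpower_1; lra.
  rewrite /S0; lra.
have Hsum : (INR #|F| * / 2 <= \big[Rplus/0%R]_y (S0 y * INR (cnt y)))%R.
  rewrite -sum_const_R.
  apply: Rle_trans (sum_le_R (P := predT) (fun a _ => Hhalf a)) _.
  rewrite exchange_big /=; apply: Req_le; apply: eq_bigr => y _.
  by rewrite -big_distrr /= sum_indic_R.
pose y0 : transcript n m l := [ffun _ => Ordinal Hl].
case: (@arg_maxnP _ y0 predT cnt isT) => ys _ Hmax.
have Hys : (\big[Rplus/0%R]_y (S0 y * INR (cnt y)) <= INR (cnt ys))%R.
  apply: Rle_trans (_ : _ <= \big[Rplus/0%R]_y (S0 y * INR (cnt ys)))%R _.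
    apply: sum_le_R => y _; apply: Rmult_le_compat_l; first exact: shuffled_ge0.
    by apply: le_INR; apply/leP; exact: Hmax.
  by rewrite -big_distrl /= shuffled_sum1 // Rmult_1_l; lra.
have Hq : (#|F| <= n ^ (4 * m))%N.
  apply: leq_trans (final_nat Hn mpos).
  apply: (@leq_trans (2 * cnt ys)); last by rewrite leq_mul2l (count_bound encE corr).
  apply/leP; apply: INR_le; rewrite INR_muln; simpl (INR 2); lra.
have q0 : (0 < INR #|F|)%R.
  by apply: lt_0_INR; apply/ltP; apply/card_gt0P; exists (GRing.zero : F).
have n1 : (1 < INR n)%R.
  by have := lt_INR 1 n; simpl (INR 1); move=> h; apply: h; apply/ltP.
have ln0 : (0 < ln (INR n))%R by rewrite -ln_1; apply: ln_increasing; lra.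
have Hl2 : (ln (INR #|F|) <= 4 * INR m * ln (INR n))%R.
  apply: Rle_trans (ln_le' q0 (le_INR _ _ (leP Hq))) _.
  rewrite INR_expn ln_pow; last lra.
  rewrite INR_muln; simpl (INR 4); lra.
have : (ln (INR #|F|) / ln (INR n) <= 4 * INR m)%R.
  apply: (Rmult_le_reg_r (ln (INR n))) => //.
  by rewrite /Rdiv Rmult_assoc Rinv_l; lra.
lra.
Qed.
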